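(* For all $n,k\in\mathbb{N}$ with $k\ge1$ and $n\ge k+2$, setting $x_k:=\big(1-\frac{k^2}{n^2}\big)^{1/2}$, we have $$\tau_{n,k}<\delta_{n,k}:=\frac{D_{n,k}(x_k)}{T_n^{(k)}(1)}.$$
   Context: $T_n$ denotes the Chebyshev polynomial of the first kind of degree $n$, $T_n(\cos\theta)=\cos n\theta$. For integers $n\ge k+2$, $k\ge 1$, let $\omega_{n,k}$ be the rightmost (largest) zero of $T_n^{(k+1)}$ and define $\tau_{n,k}:=|T_n^{(k)}(\omega_{n,k})|/T_n^{(k)}(1)$. Let $S_n(x):=\frac1n\sqrt{1-x^2}\,T_n'(x)$ and define the Duffin–Schaeffer majorant $D_{n,k}(x):=\big([T_n^{(k)}(x)]^2+[S_n^{(k)}(x)]^2\big)^{1/2}$ for $x\in(-1,1)$. *)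

(* Defs.v *)
From Stdlib Require Import Reals.
From Coquelicot Require Import Coquelicot.
Open Scope R_scope.

(* Chebyshev polynomial of the first kind T_n, as a real function, defined by
   the three-term recurrence T_0 = 1, T_1 = x, T_{n+2} = 2x T_{n+1} - T_n
   (equivalently T_n(cos t) = cos (n t)). *)
Fixpoint cheb_pair (n : nat) (x : R) : R * R :=
  match n with
  | O => (1, x)
  | S m => let p := cheb_pair m x in (snd p, 2 * x * snd p - fst p)
  end.

Definition Cheb (n : nat) (x : R) : R := fst (cheb_pair n x).

Definition dCheb (n k : nat) (x : R) : R := Derive_n (Cheb n) k x.

Definition Sfun (n : nat) (x : R) : R :=
  / INR n * sqrt (1 - x ^ 2) * Derive (Cheb n) x.

(* Duffin–Schaeffer majorant D_{n,k}(x) = sqrt((T_n^{(k)}(x))^2 + (S_n^{(k)}(x))^2),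
   meaningful for x in (-1,1). *)
Definition DS (n k : nat) (x : R) : R :=
  sqrt ((dCheb n k x) ^ 2 + (Derive_n (Sfun n) k x) ^ 2).

Definition is_rightmost_zero (n k : nat) (omega : R) : Prop :=
  dCheb n (k + 1) omega = 0 /\
  (forall y, dCheb n (k + 1) y = 0 -> y <= omega).

Definition tau (n k : nat) (omega : R) : R :=
  Rabs (dCheb n k omega) / dCheb n k 1.

Definition xk (n k : nat) : R := sqrt (1 - (INR k) ^ 2 / (INR n) ^ 2).

Definition delta (n k : nat) : R := DS n k (xk n k) / dCheb n k 1.

(* Main.v *)
Require Import Defs.
From Stdlib Require Import Reals Lra Lia List.
From Coquelicot Require Import Coquelicot.
Open Scope R_scope.


Fixpoint peval (p : list R) (x : R) : R :=
  match p with nil => 0 | a :: q => a + x * peval q x end.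
Fixpoint padd (p q : list R) : list R :=
  match p, q with
  | nil, _ => q
  | _, nil => p
  | a :: p', b :: q' => (a + b) :: padd p' q'
  end.
Definition pscal (c : R) (p : list R) := map (fun a => c * a) p.
Fixpoint pder (p : list R) : list R :=
  match p with
  | nil => nil
  | a :: q => match q with nil => nil | _ => padd q (0 :: pder q) end
  end.

Lemma dconst (a x : R) : is_derive (fun _ => a) x 0.
Proof. auto_derive; auto. Qed.
Lemma did (x : R) : is_derive (fun y => y) x 1.
Proof. auto_derive; auto. Qed.

Lemma peval_padd p q x : peval (padd p q) x = peval p x + peval q x.
Proof.
  revert q; induction p as [|a p IH]; intros [|b q]; simpl; try ring.
  rewrite IH; ring.
Qed.

Lemma peval_pscal c p x : peval (pscal c p) x = c * peval p x.
Proof. unfold pscal. induction p as [|a p IH]; simpl; [ring|]. rewrite IH; ring. Qed.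

Lemma length_padd p q : length (padd p q) = Nat.max (length p) (length q).
Proof.
  revert q; induction p as [|a p IH]; intros [|b q]; simpl; auto.
Qed.

Lemma length_pder p : length (pder p) = pred (length p).
Proof.
  induction p as [|a p IH]; simpl; auto.
  destruct p as [|b p]; simpl; auto.
  rewrite length_padd. simpl in *. rewrite IH. simpl. lia.
Qed.

Lemma is_derive_peval p x : is_derive (peval p) x (peval (pder p) x).
Proof.
  induction p as [|a q IH]; simpl.
  - apply dconst.
  - assert (H : is_derive (fun y => a + y * peval q y) x (0 + (1 * peval q x + x * peval (pder q) x))).
    { apply (is_derive_plus (fun _ => a) (fun y => y * peval q y)).
      apply dconst.
      apply (is_derive_mult (fun y => y) (peval q)). apply did. exact IH.
      intros; apply Rmult_comm. }
    destruct q as [|b q].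
    + simpl in *. replace 0 with (0 + (1 * 0 + x * 0)) by ring.
      eapply is_derive_ext; [|exact H]. intros; simpl; ring.
    + eapply is_derive_ext. 2:{ replace (peval (padd (b :: q) (0 :: pder (b :: q))) x)
        with (0 + (1 * peval (b :: q) x + x * peval (pder (b :: q)) x)). exact H.
        rewrite peval_padd. simpl. ring. }
      intros; reflexivity.
Qed.

Fixpoint cp_pair (n : nat) : list R * list R :=
  match n with
  | O => (1 :: nil, 0 :: 1 :: nil)
  | S m => let p := cp_pair m in
           (snd p, padd (0 :: pscal 2 (snd p)) (pscal (-1) (fst p)))
  end.
Definition cpoly n := fst (cp_pair n).

Lemma cp_pair_ok n x :
  fst (cheb_pair n x) = peval (fst (cp_pair n)) x /\
  snd (cheb_pair n x) = peval (snd (cp_pair n)) x.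
Proof.
  induction n as [|m [IH1 IH2]].
  - simpl; split; ring.
  - change (cp_pair (S m)) with (let p := cp_pair m in
           (snd p, padd (0 :: pscal 2 (snd p)) (pscal (-1) (fst p)))).
    change (cheb_pair (S m) x) with (let p := cheb_pair m x in (snd p, 2 * x * snd p - fst p)).
    cbv zeta. cbn [fst snd]. split; [exact IH2|].
    rewrite peval_padd, !peval_pscal. cbn [peval].
    rewrite peval_pscal, <- IH1, <- IH2. ring.
Qed.

Lemma cp_pair_len n : length (fst (cp_pair n)) = S n /\ length (snd (cp_pair n)) = S (S n).
Proof.
  induction n as [|m [IH1 IH2]]; [simpl; auto|].
  change (cp_pair (S m)) with (let p := cp_pair m in
           (snd p, padd (0 :: pscal 2 (snd p)) (pscal (-1) (fst p)))).
  cbv zeta. cbn [fst snd]. split; auto.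
  rewrite length_padd. cbn [length]. unfold pscal. rewrite !length_map. lia.
Qed.

Lemma Cheb_poly n x : Cheb n x = peval (cpoly n) x.
Proof. apply cp_pair_ok. Qed.

Lemma Derive_n_peval p j x : Derive_n (peval p) j x = peval (Nat.iter j pder p) x.
Proof.
  revert x; induction j as [|j IH]; intros x; simpl; auto.
  rewrite (Derive_ext _ (peval (Nat.iter j pder p))) by exact IH.
  apply is_derive_unique, is_derive_peval.
Qed.

Lemma dCheb_poly n j x : dCheb n j x = peval (Nat.iter j pder (cpoly n)) x.
Proof.
  unfold dCheb. rewrite (Derive_n_ext _ (peval (cpoly n))) by apply Cheb_poly.
  apply Derive_n_peval.
Qed.

Lemma u_deriv n j x : is_derive (dCheb n j) x (dCheb n (S j) x).
Proof.
  eapply is_derive_ext. intros t; symmetry; apply dCheb_poly.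
  rewrite dCheb_poly. simpl. apply is_derive_peval.
Qed.

Lemma Derive_u n j x : Derive (dCheb n j) x = dCheb n (S j) x.
Proof. apply is_derive_unique, u_deriv. Qed.

Lemma len_iter p j : length (Nat.iter j pder p) = (length p - j)%nat.
Proof.
  induction j as [|j IH]; simpl. lia.
  rewrite length_pder, IH. lia.
Qed.

Lemma u_high n x : dCheb n (S n) x = 0.
Proof.
  rewrite dCheb_poly.
  assert (H : length (Nat.iter (S n) pder (cpoly n)) = 0%nat).
  { rewrite len_iter. unfold cpoly. rewrite (proj1 (cp_pair_len n)). lia. }
  destruct (Nat.iter (S n) pder (cpoly n)); simpl in *; [reflexivity|discriminate].
Qed.

Lemma u_cont_pt n j x : continuity_pt (dCheb n j) x.
Proof.
  apply derivable_continuous_pt. exists (dCheb n (S j) x).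
  apply is_derive_Reals, u_deriv.
Qed.

Lemma u_cont n j : continuity (dCheb n j).
Proof. intro x; apply u_cont_pt. Qed.

Lemma Derive_u' n j x : Derive (fun y => dCheb n j y) x = dCheb n (S j) x.
Proof. apply is_derive_unique, u_deriv. Qed.

Lemma exd n j x : ex_derive (fun y => dCheb n j y) x.
Proof. eexists; apply u_deriv. Qed.

Ltac side := repeat split; try apply exd; auto.
Ltac dsolve := apply is_derive_unique; auto_derive; [side | match goal with |- ?a = ?b => change (@eq R a b) end; rewrite ?Derive_u'].

Lemma INR1 : INR 1 = 1. Proof. reflexivity. Qed.
Lemma INR2 : INR 2 = 2. Proof. simpl; ring. Qed.

Lemma Cheb_rec m x : Cheb (S (S m)) x = 2*x*Cheb (S m) x - Cheb m x.
Proof. reflexivity. Qed.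

Lemma d0 n x : dCheb n 0 x = Cheb n x.
Proof. reflexivity. Qed.

Lemma drec m j x : dCheb (S (S m)) (S j) x =
  2 * INR (S j) * dCheb (S m) j x + 2 * x * dCheb (S m) (S j) x - dCheb m (S j) x.
Proof.
  revert x; induction j as [|j IH]; intros x.
  - change (dCheb (S (S m)) 1 x) with (Derive (fun y => Cheb (S (S m)) y) x).
    rewrite (Derive_ext _ (fun y => 2*y*dCheb (S m) 0 y - dCheb m 0 y)).
    2:{ intros; rewrite !d0; apply Cheb_rec. }
    dsolve. rewrite ?INR_0, ?INR1, ?INR2. ring.
  - change (dCheb (S (S m)) (S (S j)) x) with (Derive (dCheb (S (S m)) (S j)) x).
    rewrite (Derive_ext _ (fun y => 2 * (INR j + 1) * dCheb (S m) j y + 2 * y * dCheb (S m) (S j) y - dCheb m (S j) y)).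
    2:{ intros; rewrite IH, S_INR; ring. }
    dsolve. rewrite !S_INR. ring.
Qed.

Lemma Cheb0 x : Cheb 0 x = 1. Proof. reflexivity. Qed.
Lemma Cheb1 x : Cheb 1 x = x. Proof. reflexivity. Qed.
Lemma d01 x : dCheb 0 1 x = 0. Proof. rewrite dCheb_poly; simpl; ring. Qed.
Lemma d02 x : dCheb 0 2 x = 0. Proof. rewrite dCheb_poly; simpl; ring. Qed.
Lemma d11 x : dCheb 1 1 x = 1. Proof. rewrite dCheb_poly; simpl; ring. Qed.
Lemma d12 x : dCheb 1 2 x = 0. Proof. rewrite dCheb_poly; simpl; ring. Qed.

Definition bprop m := forall x, (1 - x^2) * dCheb (S m) 1 x = INR (S m) * (Cheb m x - x * Cheb (S m) x).

Lemma bprop_all m : bprop m.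
Proof.
  assert (H : forall m1, bprop m1 /\ bprop (S m1)).
  { clear m; intro m0; induction m0 as [|m IH].
    - split; intro x.
      + rewrite d11, Cheb0, Cheb1. rewrite ?INR_0, ?INR1, ?INR2. ring.
      + rewrite (drec 0 0), d0, d11, d01, Cheb1, Cheb_rec, Cheb1, Cheb0. rewrite ?INR_0, ?INR1, ?INR2. ring.
    - destruct IH as [H1 H2]. split; [exact H2|]. intro x.
      rewrite (drec (S m) 0), d0.
      transitivity (2 * (1 - x^2) * Cheb (S (S m)) x + 2 * x * ((1 - x^2) * dCheb (S (S m)) 1 x)
                    - (1 - x^2) * dCheb (S m) 1 x). rewrite ?INR_0, ?INR1, ?INR2; ring.
      rewrite H1, H2. rewrite (Cheb_rec (S m)), (Cheb_rec m). rewrite !S_INR. ring. }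
  apply H.
Qed.

Opaque dCheb Cheb.

Definition Eprop m := forall x, (1 - x^2) * dCheb m 2 x - x * dCheb m 1 x + INR m ^ 2 * Cheb m x = 0.

Lemma Eprop_all m : Eprop m.
Proof.
  assert (H : forall m1, Eprop m1 /\ Eprop (S m1)).
  { clear m; intro m0; induction m0 as [|m IH].
    - split; intro x.
      + rewrite d02, d01, Cheb0. rewrite ?INR_0, ?INR1, ?INR2. ring.
      + rewrite d12, d11, Cheb1. rewrite ?INR_0, ?INR1, ?INR2. ring.
    - destruct IH as [H0 H1]. split; [exact H1|]. intro x.
      rewrite (drec m 1), (drec m 0), d0, (Cheb_rec m).
      transitivity (2 * x * ((1 - x^2) * dCheb (S m) 2 x - x * dCheb (S m) 1 x + INR (S m) ^ 2 * Cheb (S m) x)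
        - ((1 - x^2) * dCheb m 2 x - x * dCheb m 1 x + INR m ^ 2 * Cheb m x)
        + 4 * ((1 - x^2) * dCheb (S m) 1 x - INR (S m) * (Cheb m x - x * Cheb (S m) x))).
      rewrite !S_INR, INR_0. ring.
      rewrite (H0 x), (H1 x), (bprop_all m x). ring. }
  apply H.
Qed.

Lemma ode_step (f0 f1 f2 f3 : R -> R) (a b : R) :
  (forall x, is_derive f0 x (f1 x)) -> (forall x, is_derive f1 x (f2 x)) ->
  (forall x, is_derive f2 x (f3 x)) ->
  (forall x, (1 - x^2) * f2 x - a * x * f1 x + b * f0 x = 0) ->
  forall x, (1 - x^2) * f3 x - (a + 2) * x * f2 x + (b - a) * f1 x = 0.
Proof.
  intros D0 D1 D2 H x.
  assert (E1 : Derive (fun y => (1 - y^2) * f2 y - a * y * f1 y + b * f0 y) x = 0).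
  { rewrite (Derive_ext _ (fun _ => 0)) by exact H. apply Derive_const. }
  assert (E2 : Derive (fun y => (1 - y^2) * f2 y - a * y * f1 y + b * f0 y) x =
     (1 - x^2) * f3 x - (a + 2) * x * f2 x + (b - a) * f1 x).
  { apply is_derive_unique. auto_derive.
    - repeat split; eexists; eauto.
    - assert (Q0 : Derive (fun y => f0 y) x = f1 x) by (apply is_derive_unique; apply D0).
      assert (Q1 : Derive (fun y => f1 y) x = f2 x) by (apply is_derive_unique; apply D1).
      assert (Q2 : Derive (fun y => f2 y) x = f3 x) by (apply is_derive_unique; apply D2).
      rewrite ?Q0, ?Q1, ?Q2. ring. }
  rewrite <- E2; exact E1.
Qed.

Definition ODE n j := forall x, (1 - x^2) * dCheb n (S (S j)) x
   - (2 * INR j + 1) * x * dCheb n (S j) x + (INR n ^ 2 - INR j ^ 2) * dCheb n j x = 0.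

Lemma ODE_all n j : ODE n j.
Proof.
  induction j as [|j IH].
  - intro x. rewrite d0. rewrite INR_0.
    pose proof (Eprop_all n x). lra.
  - intro x. pose proof (ode_step _ _ _ _ _ _ (u_deriv n j) (u_deriv n (S j)) (u_deriv n (S (S j))) IH x) as H.
    rewrite S_INR. replace (2 * (INR j + 1) + 1) with (2 * INR j + 1 + 2) by ring.
    replace (INR n ^ 2 - (INR j + 1) ^ 2) with (INR n ^ 2 - INR j ^ 2 - (2 * INR j + 1)) by ring.
    exact H.
Qed.

Lemma cheb_pair_1 m : cheb_pair m 1 = (1, 1).
Proof. induction m as [|m IH]; simpl; [reflexivity|]. rewrite IH. simpl. f_equal; ring. Qed.

Transparent Cheb.
Lemma Cheb_at1 n : Cheb n 1 = 1.
Proof. unfold Cheb. rewrite cheb_pair_1. reflexivity. Qed.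
Opaque Cheb.

Lemma u_at1_rec n j : (2 * INR j + 1) * dCheb n (S j) 1 = (INR n ^ 2 - INR j ^ 2) * dCheb n j 1.
Proof. pose proof (ODE_all n j 1). lra. Qed.

Lemma u_at1_pos n j : (j <= n)%nat -> 0 < dCheb n j 1.
Proof.
  induction j as [|j IH]; intros Hj.
  - rewrite d0, Cheb_at1. lra.
  - pose proof (u_at1_rec n j) as H.
    assert (Hj' : INR j < INR n) by (apply lt_INR; lia).
    assert (0 <= INR j) by apply pos_INR.
    assert (P : 0 < dCheb n j 1) by (apply IH; lia).
    assert (0 < INR n ^ 2 - INR j ^ 2) by nra.
    assert (0 < (INR n ^ 2 - INR j ^ 2) * dCheb n j 1) by nra.
    nra.
Qed.

Lemma mvt_u n j a b : a <= b ->
  exists c, a <= c <= b /\ dCheb n j b - dCheb n j a = dCheb n (S j) c * (b - a).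
Proof.
  intros Hab.
  destruct (MVT_gen (dCheb n j) a b (dCheb n (S j))) as [c [Hc E]].
  - intros; apply u_deriv.
  - intros; apply u_cont_pt.
  - exists c. rewrite Rmin_left, Rmax_right in Hc by lra. split; auto.
Qed.

Lemma u_n_const n x : dCheb n n x = dCheb n n 1.
Proof.
  destruct (Rle_dec x 1) as [H|H].
  - destruct (mvt_u n n x 1 H) as [c [_ E]]. rewrite u_high in E. lra.
  - destruct (mvt_u n n 1 x) as [c [_ E]]. lra. rewrite u_high in E. lra.
Qed.

Lemma u_ge1 n i : (i <= n)%nat -> forall x, 1 <= x -> dCheb n (n - i) 1 <= dCheb n (n - i) x.
Proof.
  induction i as [|i IH]; intros Hi x Hx.
  - rewrite Nat.sub_0_r, (u_n_const n x). lra.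
  - destruct (mvt_u n (n - S i) 1 x Hx) as [c [Hc E]].
    replace (S (n - S i)) with (n - i)%nat in E by lia.
    assert (P : 0 < dCheb n (n - i) 1) by (apply u_at1_pos; lia).
    pose proof (IH ltac:(lia) c ltac:(lra)).
    assert (0 <= dCheb n (n - i) c * (x - 1)) by (apply Rmult_le_pos; lra).
    lra.
Qed.

Lemma u_pos_ge1 n j x : (j <= n)%nat -> 1 <= x -> 0 < dCheb n j x.
Proof.
  intros Hj Hx. replace j with (n - (n - j))%nat by lia.
  apply (Rlt_le_trans _ (dCheb n (n - (n - j)) 1)); [apply u_at1_pos; lia|]. apply u_ge1; [lia|exact Hx].
Qed.

Opaque dCheb Cheb.

Lemma cont_pos f c : continuity_pt f c -> 0 < f c ->
  exists d, 0 < d /\ forall y, Rabs (y - c) < d -> 0 < f y.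
Proof.
  intros H Hc.
  unfold continuity_pt, continue_in, limit1_in, limit_in in H.
  destruct (H (f c) Hc) as [d [Hd Hy]].
  exists d; split; auto. intros y Hyd.
  destruct (Req_dec y c) as [->|Hne]; auto.
  assert (Q : R_dist (f y) (f c) < f c).
  { apply Hy. split. split. exact I. auto. simpl. unfold R_dist. exact Hyd. }
  unfold R_dist in Q. apply Rabs_def2 in Q. lra.
Qed.

Lemma cont_neg f c : continuity_pt f c -> f c < 0 ->
  exists d, 0 < d /\ forall y, Rabs (y - c) < d -> f y < 0.
Proof.
  intros H Hc.
  destruct (cont_pos (fun y => - f y) c) as [d [Hd Hy]].
  - apply continuity_pt_opp; auto.
  - lra.
  - exists d; split; auto. intros y Hyd. specialize (Hy y Hyd). lra.
Qed.

Lemma last_bad (f1 f2 : R -> R) a b :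
  continuity f1 -> continuity f2 -> a <= b -> (f1 a <= 0 \/ f2 a <= 0) -> 0 < f1 b -> 0 < f2 b ->
  exists c, a <= c < b /\ (f1 c <= 0 \/ f2 c <= 0) /\ 0 <= f1 c /\ 0 <= f2 c /\
    (forall x, c < x <= b -> 0 < f1 x /\ 0 < f2 x).
Proof.
  intros C1 C2 Hab Ha Hb1 Hb2.
  set (E := fun x => a <= x <= b /\ (f1 x <= 0 \/ f2 x <= 0)).
  destruct (completeness E) as [c [Hub Hlub]].
  - exists b. intros x [Hx _]. lra.
  - exists a. split; [lra|auto].
  - assert (Hac : a <= c) by (apply Hub; split; [lra|auto]).
    assert (Hcb : c <= b) by (apply Hlub; intros x [Hx _]; lra).
    assert (Good : forall x, c < x <= b -> 0 < f1 x /\ 0 < f2 x).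
    { intros x Hx. destruct (Rlt_dec 0 (f1 x)); destruct (Rlt_dec 0 (f2 x)); auto;
      exfalso; assert (E x) by (split; [lra|lra]); assert (x <= c) by (apply Hub; auto); lra. }
    assert (Bad : f1 c <= 0 \/ f2 c <= 0).
    { destruct (Rle_dec (f1 c) 0); auto. destruct (Rle_dec (f2 c) 0); auto.
      exfalso.
      destruct (cont_pos f1 c (C1 c)) as [d1 [Hd1 P1]]; [lra|].
      destruct (cont_pos f2 c (C2 c)) as [d2 [Hd2 P2]]; [lra|].
      set (d := Rmin d1 d2).
      assert (Hd : 0 < d) by (apply Rmin_pos; auto).
      assert (c <= c - d / 2).
      { apply Hlub. intros x [Hx Hbx].
        destruct (Rle_dec x (c - d)). lra.
        assert (x <= c) by (apply Hub; split; auto).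
        assert (Rabs (x - c) < d1).
        { apply Rabs_def1; unfold d in *; pose proof (Rmin_l d1 d2); lra. }
        assert (Rabs (x - c) < d2).
        { apply Rabs_def1; unfold d in *; pose proof (Rmin_r d1 d2); lra. }
        specialize (P1 x ltac:(assumption)). specialize (P2 x ltac:(assumption)). lra. }
      lra. }
    assert (Hcb' : c < b).
    { destruct (Req_dec c b) as [->|]; [|lra]. destruct Bad; lra. }
    assert (Nn : forall f, continuity f -> (forall x, c < x <= b -> 0 < f x) -> 0 <= f c).
    { intros f Cf Hf. destruct (Rle_dec 0 (f c)) as [|Hn]; auto. exfalso.
      destruct (cont_neg f c (Cf c)) as [d [Hd P]]; [lra|].
      set (x := Rmin (c + d / 2) b).
      assert (c < x <= b).
      { unfold x; split. apply Rmin_glb_lt; lra. apply Rmin_r. }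
      assert (Rabs (x - c) < d).
      { apply Rabs_def1. unfold x; pose proof (Rmin_l (c + d/2) b); lra. lra. }
      specialize (P x ltac:(assumption)). specialize (Hf x ltac:(assumption)). lra. }
    exists c. repeat split; try lra; auto.
    + apply Nn; auto. intros; apply Good; auto.
    + apply Nn; auto. intros; apply Good; auto.
    + apply Good; auto.
    + apply Good; auto.
Qed.

Lemma deriv_pos_right f c l : is_derive f c l -> 0 < l -> forall b, c < b ->
  exists x, c < x <= b /\ f c < f x.
Proof.
  intros H Hl b Hb.
  apply is_derive_Reals in H.
  destruct (H l Hl) as [del Hdel].
  set (h := Rmin (del / 2) (b - c)).
  assert (Hh : 0 < h) by (apply Rmin_pos; [pose proof (cond_pos del); lra | lra]).
  assert (Hh2 : h <= b - c) by apply Rmin_r.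
  assert (Hh3 : h <= del / 2) by apply Rmin_l.
  assert (Q : Rabs ((f (c + h) - f c) / h - l) < l).
  { apply Hdel. lra. rewrite Rabs_right by lra. pose proof (cond_pos del); lra. }
  apply Rabs_def2 in Q.
  exists (c + h). split; [lra|].
  assert (0 < (f (c + h) - f c) / h) by lra.
  assert (0 < (f (c + h) - f c)).
  { replace (f (c + h) - f c) with (((f (c + h) - f c) / h) * h) by (field; lra).
    apply Rmult_lt_0_compat; auto. }
  lra.
Qed.

Lemma cont_of_der f : (forall x, exists l, is_derive f x l) -> continuity f.
Proof.
  intros H x. destruct (H x) as [l Hl]. apply derivable_continuous_pt.
  exists l. apply is_derive_Reals; auto.
Qed.

Lemma INR_facts n j : (1 <= j)%nat -> (j < n)%nat -> 1 <= INR j /\ INR j < INR n.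
Proof.
  intros H1 H2. split. apply (le_INR 1); auto. apply lt_INR; auto.
Qed.

Lemma xk_facts n j : (j < n)%nat ->
  xk n j ^ 2 = 1 - INR j ^ 2 / INR n ^ 2 /\ 0 < xk n j /\ xk n j <= 1.
Proof.
  intros H. assert (Hn : INR j < INR n) by (apply lt_INR; auto).
  assert (Hj : 0 <= INR j) by apply pos_INR.
  assert (Q : 0 < 1 - INR j ^ 2 / INR n ^ 2).
  { assert (INR j ^ 2 / INR n ^ 2 < 1).
    { apply (Rmult_lt_reg_r (INR n ^ 2)). nra.
      unfold Rdiv. rewrite Rmult_assoc, Rinv_l by nra. nra. }
    lra. }
  unfold xk. split; [|split].
  - apply pow2_sqrt; lra.
  - apply sqrt_lt_R0; auto.
  - assert (0 <= INR j ^ 2 / INR n ^ 2).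
    { apply Rmult_le_pos. nra. left; apply Rinv_0_lt_compat; nra. }
    apply (Rle_trans _ (sqrt 1)); [apply sqrt_le_1_alt; lra | rewrite sqrt_1; lra].
Qed.

Lemma xk_mono n j : (S j <= n)%nat -> xk n (S j) <= xk n j.
Proof.
  intros H. unfold xk. apply sqrt_le_1_alt.
  assert (INR j ^ 2 <= INR (S j) ^ 2).
  { rewrite S_INR. pose proof (pos_INR j). nra. }
  assert (0 < INR n) by (apply lt_0_INR; lia).
  assert (INR j ^ 2 / INR n ^ 2 <= INR (S j) ^ 2 / INR n ^ 2).
  { unfold Rdiv. apply Rmult_le_compat_r; auto. left; apply Rinv_0_lt_compat; nra. }
  lra.
Qed.

Lemma P_pos (N J X x : R) : 1 <= J -> J < N -> X ^ 2 = 1 - J ^ 2 / N ^ 2 -> 0 < X ->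
  X <= x -> x <= 1 ->
  let beta := N ^ 2 * X / J in
  0 < (2 * J + 1) * x * beta - (N ^ 2 - J ^ 2) - (1 - x ^ 2) * beta ^ 2.
Proof.
  intros HJ HN HX HX0 Hx Hx1 beta.
  assert (E1 : N ^ 2 - J ^ 2 = N ^ 2 * X ^ 2).
  { rewrite HX. field. nra. }
  assert (E2 : 1 - X ^ 2 = J ^ 2 / N ^ 2) by lra.
  assert (PX : (2 * J + 1) * X * beta - (N ^ 2 - J ^ 2) - (1 - X ^ 2) * beta ^ 2 = N ^ 2 * X ^ 2 / J).
  { rewrite E1, E2. unfold beta. field. split; nra. }
  assert (Hb : 0 < beta).
  { unfold beta. apply Rmult_lt_0_compat. nra. apply Rinv_0_lt_compat; lra. }
  assert (0 < N ^ 2 * X ^ 2 / J).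
  { apply Rmult_lt_0_compat. nra. apply Rinv_0_lt_compat; lra. }
  assert (D : (2 * J + 1) * x * beta - (N ^ 2 - J ^ 2) - (1 - x ^ 2) * beta ^ 2
    - ((2 * J + 1) * X * beta - (N ^ 2 - J ^ 2) - (1 - X ^ 2) * beta ^ 2)
    = (2 * J + 1) * beta * (x - X) + beta ^ 2 * (x - X) * (x + X)) by ring.
  assert (0 <= (2 * J + 1) * beta * (x - X)).
  { apply Rmult_le_pos; [|lra]. nra. }
  assert (0 <= beta ^ 2 * (x - X) * (x + X)).
  { apply Rmult_le_pos; [|lra]. apply Rmult_le_pos; [nra|lra]. }
  lra.
Qed.

Lemma barrier n j : (1 <= j)%nat -> (j < n)%nat ->
  (forall x, xk n (S j) <= x -> 0 < dCheb n (S j) x) ->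
  forall x, xk n j <= x <= 1 ->
    0 < dCheb n j x /\ dCheb n (S j) x < INR n ^ 2 * xk n j / INR j * dCheb n j x.
Proof.
  intros Hj1 Hjn Hpos x0 Hx0.
  destruct (INR_facts n j Hj1 Hjn) as [HJ HN].
  destruct (xk_facts n j Hjn) as [HX [HX0 HX1]].
  pose proof (xk_mono n j Hjn) as Hmono.
  set (beta := INR n ^ 2 * xk n j / INR j) in *.
  assert (Hb : 0 < beta).
  { unfold beta. apply Rmult_lt_0_compat. apply Rmult_lt_0_compat; [nra|lra]. apply Rinv_0_lt_compat; lra. }
  assert (HP : forall x, xk n j <= x <= 1 ->
     0 < (2 * INR j + 1) * x * beta - (INR n ^ 2 - INR j ^ 2) - (1 - x ^ 2) * beta ^ 2).
  { intros x Hx. apply P_pos; auto; lra. }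
  set (f1 := dCheb n j).
  set (f2 := fun y => beta * dCheb n j y - dCheb n (S j) y).
  assert (C1 : continuity f1) by apply u_cont.
  assert (C2 : continuity f2).
  { apply cont_of_der. intro x. exists (beta * dCheb n (S j) x - dCheb n (S (S j)) x).
    unfold f2. auto_derive; [side|]. rewrite !Derive_u'. ring. }
  assert (F1 : 0 < f1 1) by (apply u_at1_pos; lia).
  assert (F2 : 0 < f2 1).
  { unfold f2. pose proof (u_at1_rec n j) as R1.
    pose proof (HP 1 ltac:(lra)) as P1.
    replace (1 - 1 ^ 2) with 0 in P1 by ring.
    assert (0 < dCheb n j 1) by exact F1.
    assert (0 < ((2 * INR j + 1) * beta - (INR n ^ 2 - INR j ^ 2)) * dCheb n j 1).
    { apply Rmult_lt_0_compat; auto. lra. }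
    assert (0 < 2 * INR j + 1) by lra.
    apply (Rmult_lt_reg_l (2 * INR j + 1)); auto. rewrite Rmult_0_r. nra. }
  destruct (Rlt_dec 0 (f1 x0)) as [G1|G1]; destruct (Rlt_dec 0 (f2 x0)) as [G2|G2].
  - unfold f1, f2 in *. split; auto. lra.
  - exfalso. assert (Bd : f1 x0 <= 0 \/ f2 x0 <= 0) by (right; lra).
    destruct (last_bad f1 f2 x0 1 C1 C2 ltac:(lra) Bd F1 F2) as [c [Hc [Bc [N1 [N2 Good]]]]].
    assert (Pc : 0 < dCheb n (S j) c) by (apply Hpos; lra).
    assert (Hf1c : 0 < f1 c).
    { destruct (Rle_dec (f1 c) 0); [|lra]. assert (f1 c = 0) by lra.
      unfold f1, f2 in *. nra. }
    assert (Hf2c : f2 c = 0) by (destruct Bc; lra).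
    unfold f1, f2 in *.
    set (phi := fun y => dCheb n (S j) y - beta * dCheb n j y).
    assert (Dphi : is_derive phi c (dCheb n (S (S j)) c - beta * dCheb n (S j) c)).
    { unfold phi. auto_derive; [side|]. rewrite !Derive_u'. ring. }
    assert (Dpos : 0 < dCheb n (S (S j)) c - beta * dCheb n (S j) c).
    { pose proof (ODE_all n j c) as O.
      pose proof (HP c ltac:(lra)) as Pc'.
      assert (E : dCheb n (S j) c = beta * dCheb n j c) by lra.
      assert (Hs : 0 < 1 - c ^ 2) by nra.
      assert (K : (1 - c ^ 2) * (dCheb n (S (S j)) c - beta * dCheb n (S j) c) =
        dCheb n j c * ((2 * INR j + 1) * c * beta - (INR n ^ 2 - INR j ^ 2) - (1 - c ^ 2) * beta ^ 2)).
      { rewrite E in O |- *. lra. }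
      assert (0 < dCheb n j c * ((2 * INR j + 1) * c * beta - (INR n ^ 2 - INR j ^ 2) - (1 - c ^ 2) * beta ^ 2))
        by (apply Rmult_lt_0_compat; auto).
      nra. }
    destruct (deriv_pos_right phi c _ Dphi Dpos 1 ltac:(lra)) as [y [Hy Hphy]].
    destruct (Good y Hy) as [_ G]. unfold phi in Hphy. lra.
  - exfalso. assert (Bd : f1 x0 <= 0 \/ f2 x0 <= 0) by (left; lra).
    destruct (last_bad f1 f2 x0 1 C1 C2 ltac:(lra) Bd F1 F2) as [c [Hc [Bc [N1 [N2 Good]]]]].
    assert (Pc : 0 < dCheb n (S j) c) by (apply Hpos; lra).
    assert (Hf1c : 0 < f1 c).
    { destruct (Rle_dec (f1 c) 0); [|lra]. assert (f1 c = 0) by lra.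
      unfold f1, f2 in *. nra. }
    assert (Hf2c : f2 c = 0) by (destruct Bc; lra).
    unfold f1, f2 in *.
    set (phi := fun y => dCheb n (S j) y - beta * dCheb n j y).
    assert (Dphi : is_derive phi c (dCheb n (S (S j)) c - beta * dCheb n (S j) c)).
    { unfold phi. auto_derive; [side|]. rewrite !Derive_u'. ring. }
    assert (Dpos : 0 < dCheb n (S (S j)) c - beta * dCheb n (S j) c).
    { pose proof (ODE_all n j c) as O.
      pose proof (HP c ltac:(lra)) as Pc'.
      assert (E : dCheb n (S j) c = beta * dCheb n j c) by lra.
      assert (Hs : 0 < 1 - c ^ 2) by nra.
      assert (K : (1 - c ^ 2) * (dCheb n (S (S j)) c - beta * dCheb n (S j) c) =
        dCheb n j c * ((2 * INR j + 1) * c * beta - (INR n ^ 2 - INR j ^ 2) - (1 - c ^ 2) * beta ^ 2)).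
      { rewrite E in O |- *. lra. }
      assert (0 < dCheb n j c * ((2 * INR j + 1) * c * beta - (INR n ^ 2 - INR j ^ 2) - (1 - c ^ 2) * beta ^ 2))
        by (apply Rmult_lt_0_compat; auto).
      nra. }
    destruct (deriv_pos_right phi c _ Dphi Dpos 1 ltac:(lra)) as [y [Hy Hphy]].
    destruct (Good y Hy) as [_ G]. unfold phi in Hphy. lra.
  - exfalso. assert (Bd : f1 x0 <= 0 \/ f2 x0 <= 0) by (left; lra).
    destruct (last_bad f1 f2 x0 1 C1 C2 ltac:(lra) Bd F1 F2) as [c [Hc [Bc [N1 [N2 Good]]]]].
    assert (Pc : 0 < dCheb n (S j) c) by (apply Hpos; lra).
    assert (Hf1c : 0 < f1 c).
    { destruct (Rle_dec (f1 c) 0); [|lra]. assert (f1 c = 0) by lra.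
      unfold f1, f2 in *. nra. }
    assert (Hf2c : f2 c = 0) by (destruct Bc; lra).
    unfold f1, f2 in *.
    set (phi := fun y => dCheb n (S j) y - beta * dCheb n j y).
    assert (Dphi : is_derive phi c (dCheb n (S (S j)) c - beta * dCheb n (S j) c)).
    { unfold phi. auto_derive; [side|]. rewrite !Derive_u'. ring. }
    assert (Dpos : 0 < dCheb n (S (S j)) c - beta * dCheb n (S j) c).
    { pose proof (ODE_all n j c) as O.
      pose proof (HP c ltac:(lra)) as Pc'.
      assert (E : dCheb n (S j) c = beta * dCheb n j c) by lra.
      assert (Hs : 0 < 1 - c ^ 2) by nra.
      assert (K : (1 - c ^ 2) * (dCheb n (S (S j)) c - beta * dCheb n (S j) c) =
        dCheb n j c * ((2 * INR j + 1) * c * beta - (INR n ^ 2 - INR j ^ 2) - (1 - c ^ 2) * beta ^ 2)).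
      { rewrite E in O |- *. lra. }
      assert (0 < dCheb n j c * ((2 * INR j + 1) * c * beta - (INR n ^ 2 - INR j ^ 2) - (1 - c ^ 2) * beta ^ 2))
        by (apply Rmult_lt_0_compat; auto).
      nra. }
    destruct (deriv_pos_right phi c _ Dphi Dpos 1 ltac:(lra)) as [y [Hy Hphy]].
    destruct (Good y Hy) as [_ G]. unfold phi in Hphy. lra.
Qed.

Opaque dCheb Cheb.

Lemma Pos_all n j : (1 <= j <= n)%nat -> forall x, xk n j <= x -> 0 < dCheb n j x.
Proof.
  intros Hj.
  assert (H : forall i, (i <= n - 1)%nat -> forall x, xk n (n - i) <= x -> 0 < dCheb n (n - i) x).
  { induction i as [|i IH]; intros Hi x Hx.
    - rewrite Nat.sub_0_r. rewrite (u_n_const n x). apply u_at1_pos; lia.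
    - assert (E : (n - i)%nat = S (n - S i)) by lia.
      assert (IH' : forall x, xk n (S (n - S i)) <= x -> 0 < dCheb n (S (n - S i)) x).
      { rewrite <- E. apply IH; lia. }
      destruct (Rle_dec x 1) as [H1|H1].
      + assert (Hr : xk n (n - S i) <= x <= 1) by lra. exact (proj1 (barrier n (n - S i) ltac:(lia) ltac:(lia) IH' x Hr)).
      + apply u_pos_ge1; [lia|lra]. }
  replace j with (n - (n - j))%nat by lia. apply H; lia.
Qed.

Transparent Cheb.
Lemma Cheb_opp n x : Cheb n (- x) = (-1) ^ n * Cheb n x.
Proof.
  unfold Cheb.
  assert (H : forall m, fst (cheb_pair m (-x)) = (-1) ^ m * fst (cheb_pair m x) /\
                        snd (cheb_pair m (-x)) = (-1) ^ (S m) * snd (cheb_pair m x)).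
  { induction m as [|m [IH1 IH2]]; simpl; [split; ring|].
    split. simpl in IH2. exact IH2. rewrite IH1, IH2. simpl. ring. }
  apply H.
Qed.
Opaque Cheb.

Transparent dCheb.
Lemma dCheb_opp n j x : (-1) ^ j * dCheb n j (- x) = (-1) ^ n * dCheb n j x.
Proof.
  assert (H : forall j y, Derive_n (fun t => Cheb n (- t)) j y = (-1) ^ j * dCheb n j (- y)).
  { clear j x. induction j as [|j IH]; intros y.
    - change (Derive_n (fun t => Cheb n (- t)) 0 y) with (Cheb n (- y)). rewrite d0, pow_O. ring.
    - change (Derive_n (fun t => Cheb n (- t)) (S j) y) with
        (Derive (Derive_n (fun t => Cheb n (- t)) j) y).
      rewrite (Derive_ext _ (fun t => (-1) ^ j * dCheb n j (- t))) by apply IH.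
      apply is_derive_unique.
      eapply is_derive_ext; [intros t; reflexivity|].
      replace ((-1) ^ S j * dCheb n (S j) (- y)) with ((-1) ^ j * ((-1) * dCheb n (S j) (- y))) by (simpl; ring).
      apply is_derive_scal.
      apply (is_derive_comp (dCheb n j) (fun t => - t) y). apply u_deriv.
      auto_derive; auto. }
  rewrite <- H. unfold dCheb.
  rewrite (Derive_n_ext _ (fun t => (-1) ^ n * Cheb n t)) by apply Cheb_opp.
  apply Derive_n_scal_l.
Qed.
Opaque dCheb.

Lemma dCheb_opp_zero n j x : dCheb n j x = 0 -> dCheb n j (- x) = 0.
Proof.
  intros H. pose proof (dCheb_opp n j x) as E. rewrite H, Rmult_0_r in E.
  apply Rmult_integral in E. destruct E as [E|E]; auto.
  exfalso. apply (pow_nonzero (-1) j); [lra|auto].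
Qed.

Opaque dCheb Cheb.

Lemma key n k omega : (1 <= k)%nat -> (k + 2 <= n)%nat -> is_rightmost_zero n k omega ->
  Rabs (dCheb n k omega) < dCheb n k (xk n k).
Proof.
  intros Hk Hn [Hz Hmax].
  rewrite Nat.add_1_r in Hz, Hmax.
  assert (Hkn : (k < n)%nat) by lia.
  destruct (INR_facts n k Hk Hkn) as [HK HN].
  destruct (xk_facts n k Hkn) as [HX [HX0 HX1]].
  set (X := xk n k) in *.
  set (K := INR k) in *. set (N := INR n) in *.
  set (u := dCheb n k). set (u1 := dCheb n (S k)). set (u2 := dCheb n (S (S k))).
  assert (Pos1 : forall x, X <= x -> 0 < u1 x).
  { intros x Hx. apply Pos_all. lia. pose proof (xk_mono n k ltac:(lia)). unfold X in Hx. lra. }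
  assert (Pos1' : forall x, xk n (S k) <= x -> 0 < dCheb n (S k) x).
  { intros x Hx. apply Pos_all; [lia|exact Hx]. }
  destruct (barrier n k Hk Hkn Pos1' X ltac:(split; [apply Rle_refl|exact HX1])) as [uX Bar].
  fold u u1 X K N in uX, Bar.
  assert (HsX : 1 - X ^ 2 = K ^ 2 / N ^ 2) by lra.
  assert (HN0 : 0 < N) by lra.
  assert (HX1' : X < 1).
  { assert (0 < K ^ 2 / N ^ 2). { apply Rmult_lt_0_compat. nra. apply Rinv_0_lt_compat; nra. }
    nra. }
  assert (Hom : omega < X).
  { destruct (Rlt_dec omega X) as [|Hc]; auto. exfalso.
    assert (0 < u1 omega) by (apply Pos1; lra). unfold u1 in *. lra. }
  assert (Hom0 : 0 <= omega).
  { assert (- omega <= omega) by (apply Hmax; apply dCheb_opp_zero; auto). lra. }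
  destruct (Req_dec (u omega) 0) as [Hu0|Hu0].
  { rewrite Hu0, Rabs_R0. exact uX. }
  set (a := (1 - X ^ 2) * u1 X / (X * u X)).
  assert (u1X : 0 < u1 X) by (apply Pos1; lra).
  assert (Ha0 : 0 < a).
  { unfold a. apply Rmult_lt_0_compat. apply Rmult_lt_0_compat; nra.
    apply Rinv_0_lt_compat; nra. }
  assert (HaK : a < K).
  { unfold a. apply (Rmult_lt_reg_r (X * u X)). nra.
    unfold Rdiv. rewrite Rmult_assoc, Rinv_l by nra. rewrite Rmult_1_r.
    rewrite HsX.
    assert (E : K ^ 2 / N ^ 2 * (N ^ 2 * X / K * u X) = K * (X * u X)) by (field; lra).
    rewrite <- E. apply Rmult_lt_compat_l. apply Rmult_lt_0_compat. nra. apply Rinv_0_lt_compat; nra.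
    exact Bar. }
  set (c1 := N ^ 2 - (K - a) ^ 2).
  set (c0 := a * (2 * K - 1 - a)).
  set (D := fun x => c1 * (1 - x ^ 2) - c0).
  set (h := fun x => (1 - x ^ 2) * u1 x - a * x * u x).
  set (Lam := fun x => u x ^ 2 + h x ^ 2 / D x).
  set (Lv := fun x => (2 * a * x * u x ^ 2 * D x ^ 2 + 2 * x * h x ^ 2 * ((2 * K - 1 - a) * D x + c1 * (1 - x ^ 2)))
                      / ((1 - x ^ 2) * D x ^ 2)).
  assert (Hc1 : 0 < c1) by (unfold c1; nra).
  assert (Dpos : forall x, 0 <= x <= X -> 0 < D x).
  { intros x Hx. unfold D.
    assert (c1 * (1 - X ^ 2) - c0 = (K - a) ^ 2 * (1 - K ^ 2 / N ^ 2) + a).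
    { rewrite HsX. unfold c1, c0. field. lra. }
    assert (0 <= (K - a) ^ 2 * (1 - K ^ 2 / N ^ 2)).
    { apply Rmult_le_pos. nra. rewrite <- HX; nra. }
    assert (c1 * (1 - X ^ 2) <= c1 * (1 - x ^ 2)) by (apply Rmult_le_compat_l; nra).
    lra. }
  assert (hX : h X = 0).
  { unfold h, a. field. split; nra. }
  assert (LamX : Lam X = u X ^ 2).
  { unfold Lam. rewrite hX. field. apply Rgt_not_eq, Dpos; lra. }
  assert (Lam_om : u omega ^ 2 <= Lam omega).
  { unfold Lam. assert (0 <= h omega ^ 2 / D omega).
    { apply Rmult_le_pos. nra. left; apply Rinv_0_lt_compat, Dpos; lra. }
    lra. }
  assert (Der : forall x, 0 <= x <= X -> is_derive Lam x (Lv x)).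
  { intros x Hx.
    assert (Dx : 0 < D x) by auto.
    assert (Sx : 0 < 1 - x ^ 2) by nra.
    pose proof (ODE_all n k x) as O. fold u u1 u2 K N in O.
    assert (E2 : u2 x = ((2 * K + 1) * x * u1 x - (N ^ 2 - K ^ 2) * u x) / (1 - x ^ 2)).
    { field_simplify_eq; [|lra]. lra. }
    unfold Lam, h, D. unfold u, u1.
    auto_derive.
    - repeat split; try apply exd. fold u u1. unfold D in Dx. lra.
    - rewrite !Derive_u'. fold u u1 u2. rewrite E2.
      match goal with |- ?a = ?b => change (@eq R a b) end. unfold Lv, h, D in *. unfold c1, c0 in *. clearbody K N a. generalize (u x) (u1 x). intros U U1. field. split; lra. }
  assert (Cont : forall x, 0 <= x <= X -> continuity_pt Lam x).
  { intros x Hx. apply derivable_continuous_pt. exists (Lv x). apply is_derive_Reals, Der; auto. }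
  assert (Lv_nn : forall x, 0 <= x <= X -> 0 <= Lv x).
  { intros x Hx. assert (Dx : 0 < D x) by auto. assert (Sx : 0 < 1 - x ^ 2) by nra.
    unfold Lv. apply Rmult_le_pos; [|left; apply Rinv_0_lt_compat; apply Rmult_lt_0_compat; [lra|apply pow2_gt_0; lra]].
    assert (0 < (2 * K - 1 - a) * D x + c1 * (1 - x ^ 2)).
    { assert (0 < 2 * K - 1 - a) by lra.
      assert (0 < (2 * K - 1 - a) * D x) by (apply Rmult_lt_0_compat; lra).
      assert (0 < c1 * (1 - x ^ 2)) by (apply Rmult_lt_0_compat; lra). lra. }
    assert (0 <= 2 * a * x * u x ^ 2 * D x ^ 2).
    { apply Rmult_le_pos; [|apply pow2_ge_0]. apply Rmult_le_pos; [|apply pow2_ge_0].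
      apply Rmult_le_pos; lra. }
    assert (0 <= 2 * x * h x ^ 2 * ((2 * K - 1 - a) * D x + c1 * (1 - x ^ 2))).
    { apply Rmult_le_pos; [|lra]. apply Rmult_le_pos; [lra|apply pow2_ge_0]. }
    lra. }
  assert (Lv_pos : forall x, omega < x <= X -> 0 < Lv x).
  { intros x Hx. assert (Dx : 0 < D x) by (apply Dpos; lra). assert (Sx : 0 < 1 - x ^ 2) by nra.
    unfold Lv. apply Rmult_lt_0_compat; [|apply Rinv_0_lt_compat; apply Rmult_lt_0_compat; [lra|apply pow2_gt_0; lra]].
    assert (Q : 0 < (2 * K - 1 - a) * D x + c1 * (1 - x ^ 2)).
    { assert (0 < 2 * K - 1 - a) by lra.
      assert (0 < (2 * K - 1 - a) * D x) by (apply Rmult_lt_0_compat; lra).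
      assert (0 < c1 * (1 - x ^ 2)) by (apply Rmult_lt_0_compat; lra). lra. }
    assert (T1 : 0 <= 2 * a * x * u x ^ 2 * D x ^ 2).
    { apply Rmult_le_pos; [|apply pow2_ge_0]. apply Rmult_le_pos; [|apply pow2_ge_0].
      apply Rmult_le_pos; lra. }
    assert (T2 : 0 <= 2 * x * h x ^ 2 * ((2 * K - 1 - a) * D x + c1 * (1 - x ^ 2))).
    { apply Rmult_le_pos; [|lra]. apply Rmult_le_pos; [lra|apply pow2_ge_0]. }
    destruct (Req_dec (u x) 0) as [U0|U0].
    - assert (U1 : u1 x <> 0).
      { intro U1. assert (x <= omega) by (apply Hmax; exact U1). lra. }
      assert (Hh : h x <> 0).
      { unfold h. rewrite U0. intro C. apply U1.
        assert ((1 - x ^ 2) * u1 x = 0) by lra.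
        apply Rmult_integral in H. destruct H; [lra|auto]. }
      assert (0 < 2 * x * h x ^ 2 * ((2 * K - 1 - a) * D x + c1 * (1 - x ^ 2))).
      { apply Rmult_lt_0_compat; [|lra]. apply Rmult_lt_0_compat; [lra|].
        apply pow2_gt_0; auto. }
      lra.
    - assert (0 < 2 * a * x * u x ^ 2 * D x ^ 2).
      { apply Rmult_lt_0_compat; [|apply pow2_gt_0; lra].
        apply Rmult_lt_0_compat; [apply Rmult_lt_0_compat; lra|]. apply pow2_gt_0; auto. }
      lra. }
  set (m := (omega + X) / 2).
  destruct (MVT_gen Lam omega m Lv) as [c [Hc Ec]].
  { intros x Hx. rewrite Rmin_left, Rmax_right in Hx by (unfold m; lra). apply Der. unfold m in Hx; lra. }
  { intros x Hx. rewrite Rmin_left, Rmax_right in Hx by (unfold m; lra). apply Cont. unfold m in Hx; lra. }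
  rewrite Rmin_left, Rmax_right in Hc by (unfold m; lra).
  destruct (MVT_gen Lam m X Lv) as [c' [Hc' Ec']].
  { intros x Hx. rewrite Rmin_left, Rmax_right in Hx by (unfold m; lra). apply Der. unfold m in Hx; lra. }
  { intros x Hx. rewrite Rmin_left, Rmax_right in Hx by (unfold m; lra). apply Cont. unfold m in Hx; lra. }
  rewrite Rmin_left, Rmax_right in Hc' by (unfold m; lra).
  assert (0 <= Lv c * (m - omega)).
  { apply Rmult_le_pos. apply Lv_nn. unfold m in Hc; lra. unfold m; lra. }
  assert (0 < Lv c' * (X - m)).
  { apply Rmult_lt_0_compat. apply Lv_pos. unfold m in Hc'; lra. unfold m; lra. }
  assert (Fin : u omega ^ 2 < u X ^ 2) by lra.
  change (Rabs (u omega) < u X).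
  rewrite <- (Rabs_pos_eq (u X)) by lra.
  apply Rsqr_lt_abs_0. unfold Rsqr. nra.
Qed.


Theorem proposition4p1 (n k : nat) (omega : R) :
  (1 <= k)%nat -> (k + 2 <= n)%nat ->
  is_rightmost_zero n k omega ->
  tau n k omega < delta n k.
Proof.
  intros Hk Hn Hz. pose proof (key n k omega Hk Hn Hz) as Kk.
  unfold tau, delta.
  assert (P : 0 < dCheb n k 1) by (apply u_at1_pos; lia).
  assert (DSge : dCheb n k (xk n k) <= DS n k (xk n k)).
  { unfold DS. pose proof (Rabs_pos (dCheb n k omega)).
    rewrite <- (sqrt_pow2 (dCheb n k (xk n k))) at 1 by lra.
    apply sqrt_le_1_alt. pose proof (pow2_ge_0 (Derive_n (Sfun n) k (xk n k))). lra. }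
  unfold Rdiv. apply Rmult_lt_compat_r. apply Rinv_0_lt_compat; auto. lra.
Qed.
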